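(* Let $L$ be a pretransitive logic. (1) For every formula $\varphi$: $L[1]\vdash\varphi$ iff $L\vdash\Diamond^*\Box^*\varphi$. (2) If $L$ is decidable, then so is $L[1]$. (3) If $L$ has the finite model property, then so does $L[1]$.
   Context: Logics are normal $n$-modal logics. $\Diamond^0\varphi=\varphi$, $\Diamond^{i+1}\varphi=\Diamond^i(\bigvee_{j<n}\Diamond_j\varphi)$, $\Diamond^{\le m}\varphi=\bigvee_{i\le m}\Diamond^i\varphi$. $L$ is pretransitive if $L\vdash\Diamond^{m+1}p\to\Diamond^{\le m}p$ for some $m$; for the least such $m$, $\Diamond^*=\Diamond^{\le m}$ and $\Box^*=\neg\Diamond^*\neg$. $L[1]$ is the smallest logic containing $L\cup\{p_1\to\Box^*\Diamond^*p_1\}$. A logic has the finite model property if it is the set of formulas valid in some class of finite Kripke frames (equivalently, each non-theorem is refuted in a finite frame validating the logic). *)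

(* Defs.v *)
From mathcomp Require Import all_boot.
Set Implicit Arguments. Unset Strict Implicit. Unset Printing Implicit Defensive.

Inductive form (n : nat) : Type :=
| Var of nat
| Bot
| Imp of form n & form n
| Box of 'I_n & form n.

Arguments Var {n}. Arguments Bot {n}.

Section Derived.
Variable n : nat.
Definition Neg (a : form n) : form n := Imp a Bot.
Definition Top : form n := Neg Bot.
Definition Or (a b : form n) : form n := Imp (Neg a) b.
Definition Dia (i : 'I_n) (a : form n) : form n := Neg (Box i (Neg a)).

Definition DiaAll (a : form n) : form n :=
  foldr (fun j acc => Or (Dia j a) acc) Bot (enum 'I_n).

Fixpoint DiaIter (i : nat) (a : form n) : form n :=
  match i with
  | 0 => a
  | i'.+1 => DiaIter i' (DiaAll a)
  end.

Fixpoint DiaLe (m : nat) (a : form n) : form n :=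
  match m with
  | 0 => DiaIter 0 a
  | m'.+1 => Or (DiaLe m' a) (DiaIter m'.+1 a)
  end.

Definition BoxLe (m : nat) (a : form n) : form n := Neg (DiaLe m (Neg a)).

Fixpoint subst (s : nat -> form n) (a : form n) : form n :=
  match a with
  | Var k => s k
  | Bot => Bot
  | Imp a b => Imp (subst s a) (subst s b)
  | Box i a => Box i (subst s a)
  end.

Record normal (L : form n -> Prop) : Prop := {
  nl_ax1 : forall a b, L (Imp a (Imp b a));
  nl_ax2 : forall a b c, L (Imp (Imp a (Imp b c)) (Imp (Imp a b) (Imp a c)));
  nl_ax3 : forall a, L (Imp (Neg (Neg a)) a);
  nl_K   : forall i a b, L (Imp (Box i (Imp a b)) (Imp (Box i a) (Box i b)));
  nl_MP  : forall a b, L (Imp a b) -> L a -> L b;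
  nl_Nec : forall i a, L a -> L (Box i a);
  nl_Sub : forall s a, L a -> L (subst s a)
}.

Definition pretrans_index (L : form n -> Prop) (m : nat) : Prop :=
  L (Imp (DiaIter m.+1 (Var 0)) (DiaLe m (Var 0))).

Definition pretransitive (L : form n -> Prop) : Prop :=
  exists m, pretrans_index L m.

(* m is the least pretransitivity index of L; then \Diamond^* = DiaLe m,
   \Box^* = BoxLe m *)
Definition least_pretrans_index (L : form n -> Prop) (m : nat) : Prop :=
  pretrans_index L m /\ (forall k, pretrans_index L k -> m <= k).

Definition L1 (L : form n -> Prop) (m : nat) (a : form n) : Prop :=
  forall L' : form n -> Prop, normal L' ->
    (forall b, L b -> L' b) ->
    L' (Imp (Var 1) (BoxLe m (DiaLe m (Var 1)))) ->
    L' a.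

Fixpoint sat (W : Type) (R : 'I_n -> W -> W -> Prop) (V : nat -> W -> Prop)
    (w : W) (a : form n) : Prop :=
  match a with
  | Var k => V k w
  | Bot => False
  | Imp a b => sat R V w a -> sat R V w b
  | Box i a => forall v, R i w v -> sat R V v a
  end.

Definition frame_valid (W : Type) (R : 'I_n -> W -> W -> Prop) (a : form n) : Prop :=
  forall V w, sat R V w a.

Definition fmp (L : form n -> Prop) : Prop :=
  exists C : forall W : finType, ('I_n -> W -> W -> Prop) -> Prop,
    forall a, L a <-> (forall (W : finType) (R : 'I_n -> W -> W -> Prop),
                         C W R -> frame_valid R a).

Definition decides (L : form n -> Prop) (dec : form n -> bool) : Prop :=
  forall a, L a <-> dec a = true.

End Derived.

(* Main.v *)
Require Import Defs.
From mathcomp Require Import all_boot.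
From mathcomp Require Import boolp.
From mathcomp Require classical_sets.
From Stdlib Require Import Classical_Prop.
Set Implicit Arguments. Unset Strict Implicit. Unset Printing Implicit Defensive.

Module PA.

Section Prop_logic.
Variable n : nat.
Variable L : form n -> Prop.
Hypothesis HL : normal L.

Fixpoint inl (a : form n) (l : seq (form n)) : Prop :=
  match l with nil => False | b :: l => b = a \/ inl a l end.

Inductive der (G : seq (form n)) : form n -> Prop :=
| dhyp a : inl a G -> der G a
| dthm a : L a -> der G a
| dmp a b : der G (Imp a b) -> der G a -> der G b.

Lemma L_id a : L (Imp a a).
Proof.
have H1 := nl_ax2 HL a (Imp a a) a.
have H2 := nl_MP HL H1 (nl_ax1 HL a (Imp a a)).
exact (nl_MP HL H2 (nl_ax1 HL a a)).
Qed.

Lemma deduction h G a : der (h :: G) a -> der G (Imp h a).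
Proof.
elim=> {a} [a [->|Ha]|a Ha|a b _ IH1 _ IH2].
- exact/dthm/L_id.
- exact: dmp (dthm _ (nl_ax1 HL _ _)) (dhyp Ha).
- exact: dmp (dthm _ (nl_ax1 HL _ _)) (dthm _ Ha).
- exact: dmp (dmp (dthm _ (nl_ax2 HL _ _ _)) IH1) IH2.
Qed.

Lemma der_nil a : der nil a -> L a.
Proof.
elim=> {a} [a []|a Ha //|a b _ IH1 _ IH2].
exact (nl_MP HL IH1 IH2).
Qed.

Lemma der_weak G G' a : (forall x, inl x G -> inl x G') -> der G a -> der G' a.
Proof.
move=> sub; elim=> {a} [a Ha|a Ha|a b _ IH1 _ IH2].
- exact/dhyp/sub.
- exact: dthm.
- exact: dmp IH1 IH2.
Qed.

Lemma der_cons h G a : der G a -> der (h :: G) a.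
Proof. by apply: der_weak => x Hx; right. Qed.

Lemma der_efq G b : der G Bot -> der G b.
Proof.
move=> H.
have H1 : der G (Neg (Neg b)) := dmp (dthm _ (nl_ax1 HL Bot (Neg b))) H.
exact: dmp (dthm _ (nl_ax3 HL b)) H1.
Qed.

Lemma der_hyp0 h G : der (h :: G) h.
Proof. by apply: dhyp; left. Qed.

Lemma der_cases p G a : der (p :: G) a -> der (Neg p :: G) a -> der G a.
Proof.
move=> /deduction H1 /deduction H2.
apply: dmp (dthm _ (nl_ax3 HL a)) _.
apply: deduction.
have Hnp : der (Neg a :: G) (Neg p).
  apply: deduction.
  apply: dmp (dhyp _) (dmp (der_cons _ (der_cons _ H1)) (der_hyp0 _ _)).
  by right; left.
exact: dmp (der_hyp0 _ _) (dmp (der_cons _ H2) Hnp).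
Qed.

Definition peval (v : form n -> bool) : form n -> bool :=
  fix pe a := match a with
  | Bot => false
  | Imp a b => ~~ pe a || pe b
  | _ => v a end.

Fixpoint atoms (a : form n) : seq (form n) :=
  match a with
  | Bot => nil
  | Imp a b => atoms a ++ atoms b
  | _ => [:: a] end.

Definition lit (v : form n -> bool) p := if v p then p else Neg p.

Lemma inl_map v x ps : inl x ps -> inl (lit v x) (map (lit v) ps).
Proof. by elim: ps => //= y ps IH [->|/IH]; [left|right]. Qed.

Lemma inl_cat x l1 l2 : inl x (l1 ++ l2) <-> inl x l1 \/ inl x l2.
Proof.
elim: l1 => /= [|y l1 IH]; first by split=> [|[]//]; right.
rewrite IH; tauto.
Qed.

Lemma kalmar v a ps : (forall x, inl x (atoms a) -> inl x ps) ->
  der (map (lit v) ps) (if peval v a then a else Neg a).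
Proof.
elim: a => [k|| a IHa b IHb|i a _] /= sub.
- by apply: dhyp; apply: (inl_map v (sub _ _)); left.
- exact/dthm/L_id.
- have Ha := IHa (fun x h => sub x (proj2 (inl_cat _ _ _) (or_introl h))).
  have Hb := IHb (fun x h => sub x (proj2 (inl_cat _ _ _) (or_intror h))).
  case Ea: (peval v a) Ha => Ha; case Eb: (peval v b) Hb => Hb /=.
  + exact: dmp (dthm _ (nl_ax1 HL _ _)) Hb.
  + apply: deduction.
    exact: dmp (der_cons _ Hb) (dmp (der_hyp0 _ _) (der_cons _ Ha)).
  + exact: dmp (dthm _ (nl_ax1 HL _ _)) Hb.
  + apply: deduction; apply: der_efq.
    exact: dmp (der_cons _ Ha) (der_hyp0 _ _).
- by apply: dhyp; apply: (inl_map v (sub _ _)); left.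
Qed.

Definition upd (v : form n -> bool) p (b : bool) : form n -> bool :=
  fun q => if pselect (q = p) then b else v q.

Lemma upd_same v p b : upd v p b p = b.
Proof. by rewrite /upd; case: pselect. Qed.

Lemma upd_other v p b q : q <> p -> upd v p b q = v q.
Proof. by rewrite /upd; case: pselect. Qed.

Lemma lits_upd v p b ps x : inl x (map (lit (upd v p b)) ps) ->
  x = lit (upd v p b) p \/ inl x (map (lit v) ps).
Proof.
elim: ps => //= q ps IH [<-|/IH [->|H]]; [|by left|by right; right].
case: (pselect (q = p)) => [->|ne]; first by left.
by right; left; rewrite /lit upd_other.
Qed.

Lemma elim_atoms a ps G : (forall v, der (map (lit v) ps ++ G) a) -> der G a.
Proof.
elim: ps G => [|p ps IH] G H; first exact: (H (fun _ => true)).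
apply: (IH G) => v.
apply: (@der_cases p).
- apply: der_weak (H (upd v p true)) => x /=.
  rewrite {1}/lit upd_same => -[<-|]; first by left.
  move=> /inl_cat [/lits_upd [->|Hx]|Hx].
  + by rewrite /lit upd_same; left.
  + by right; apply/inl_cat; left.
  + by right; apply/inl_cat; right.
- apply: der_weak (H (upd v p false)) => x /=.
  rewrite {1}/lit upd_same => -[<-|]; first by left.
  move=> /inl_cat [/lits_upd [->|Hx]|Hx].
  + by rewrite /lit upd_same; left.
  + by right; apply/inl_cat; left.
  + by right; apply/inl_cat; right.
Qed.

Lemma taut a : (forall v, peval v a) -> L a.
Proof.
move=> Ht; apply: der_nil; apply: (elim_atoms (ps := atoms a)) => v.
rewrite cats0; have := kalmar v (ps := atoms a) (a := a) (fun x h => h).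
by rewrite Ht.
Qed.

End Prop_logic.

End PA.
Import PA.

Module PB.

Ltac ptaut HL := apply: (taut HL); let v := fresh "v" in move=> v; simpl;
  repeat (match goal with |- context [peval v ?x] => case: (peval v x) | |- context [v ?x] => case: (v x) end; simpl); done.

Section Modal.
Variable n : nat.
Variable L : form n -> Prop.
Hypothesis HL : normal L.

Definition And (a b : form n) := Neg (Imp a (Neg b)).

Lemma mp a b : L (Imp a b) -> L a -> L b.
Proof. exact: nl_MP. Qed.

Lemma itrans a b c : L (Imp a b) -> L (Imp b c) -> L (Imp a c).
Proof.
move=> H1 H2; apply: mp H2; apply: mp H1.
by ptaut HL.
Qed.


Lemma box_mono i a b : L (Imp a b) -> L (Imp (Box i a) (Box i b)).
Proof. move=> H; exact: mp (nl_K HL i a b) (nl_Nec HL i H). Qed.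

Lemma box_and i a b : L (Imp (Box i a) (Imp (Box i b) (Box i (And a b)))).
Proof.
have H1 : L (Imp (Box i a) (Box i (Imp b (And a b)))).
  by apply: box_mono; ptaut HL.
have H2 := nl_K HL i b (And a b).
by apply: mp (mp _ H1) H2; ptaut HL.
Qed.

Lemma dia_mono i a b : L (Imp a b) -> L (Imp (Dia i a) (Dia i b)).
Proof.
move=> H; have H' : L (Imp (Neg b) (Neg a)) by apply: mp H; ptaut HL.
by apply: mp (box_mono i H'); ptaut HL.
Qed.

Lemma dia_or i a b : L (Imp (Dia i (Or a b)) (Or (Dia i a) (Dia i b))).
Proof.
have H1 := box_and i (Neg a) (Neg b).
have H2 : L (Imp (Box i (And (Neg a) (Neg b))) (Box i (Neg (Or a b)))).
  by apply: box_mono; ptaut HL.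
by apply: mp (mp _ H1) H2; ptaut HL.
Qed.

Lemma box_neg i a : L (Neg a) -> L (Neg (Dia i a)).
Proof. by move=> H; apply: mp (nl_Nec HL i H); ptaut HL. Qed.

Definition DA (js : seq 'I_n) (a : form n) :=
  foldr (fun j acc => Or (Dia j a) acc) Bot js.

Lemma da_mono js a b : L (Imp a b) -> L (Imp (DA js a) (DA js b)).
Proof.
move=> H; elim: js => [|j js IH] /=; first by ptaut HL.
by apply: mp (mp _ (dia_mono j H)) IH; ptaut HL.
Qed.

Lemma da_or js a b : L (Imp (DA js (Or a b)) (Or (DA js a) (DA js b))).
Proof.
elim: js => [|j js IH] /=; first by ptaut HL.
by apply: mp (mp _ (dia_or j a b)) IH; ptaut HL.
Qed.

Lemma da_neg js a : L (Neg a) -> L (Neg (DA js a)).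
Proof.
move=> H; elim: js => [|j js IH] /=; first by ptaut HL.
by apply: mp (mp _ (box_neg j H)) IH; ptaut HL.
Qed.

Lemma da_in js j a : j \in js -> L (Imp (Dia j a) (DA js a)).
Proof.
elim: js => [//|k js IH]; rewrite in_cons => /orP [/eqP ->|/IH H] /=.
  by ptaut HL.
by apply: mp H; ptaut HL.
Qed.

Lemma DI_S k (a : form n) : DiaIter k.+1 a = DiaAll (DiaIter k a).
Proof. by elim: k a => [//|k IH] a; rewrite /= -IH. Qed.

Lemma DI_add i j (a : form n) : DiaIter i (DiaIter j a) = DiaIter (i + j) a.
Proof. by elim: j a => [|j IH] a; rewrite ?addn0 ?addnS //= IH. Qed.

Lemma di_mono k a b : L (Imp a b) -> L (Imp (DiaIter k a) (DiaIter k b)).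
Proof.
elim: k a b => [//|k IH] a b H /=.
by apply: IH; apply: da_mono.
Qed.

Lemma di_or k a b :
  L (Imp (DiaIter k (Or a b)) (Or (DiaIter k a) (DiaIter k b))).
Proof.
elim: k a b => [|k IH] a b /=; first by ptaut HL.
exact: itrans (di_mono k (da_or _ a b)) (IH _ _).
Qed.

Lemma di_neg k a : L (Neg a) -> L (Neg (DiaIter k a)).
Proof.
elim: k a => [//|k IH] a H /=.
by apply: IH; apply: da_neg.
Qed.

Lemma dl_mono m a b : L (Imp a b) -> L (Imp (DiaLe m a) (DiaLe m b)).
Proof.
move=> H; elim: m => [//|m IH] /=.
by apply: mp (mp _ IH) (di_mono m.+1 H); ptaut HL.
Qed.

Lemma dl_or m a b : L (Imp (DiaLe m (Or a b)) (Or (DiaLe m a) (DiaLe m b))).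
Proof.
elim: m => [|m IH] /=; first by ptaut HL.
by apply: mp (mp _ IH) (di_or m.+1 a b); ptaut HL.
Qed.

Lemma dl_neg m a : L (Neg a) -> L (Neg (DiaLe m a)).
Proof.
move=> H; elim: m => [//|m IH] /=.
by apply: mp (mp _ IH) (di_neg m.+1 H); ptaut HL.
Qed.

Lemma dl_intro k m a : k <= m -> L (Imp (DiaIter k a) (DiaLe m a)).
Proof.
elim: m => [|m IH]; first by rewrite leqn0 => /eqP -> /=; ptaut HL.
rewrite leq_eqVlt => /orP [/eqP -> /=|km]; first by ptaut HL.
by apply: mp (IH km); rewrite /=; ptaut HL.
Qed.

Lemma dl_elim m a c : (forall k, k <= m -> L (Imp (DiaIter k a) c)) ->
  L (Imp (DiaLe m a) c).
Proof.
elim: m => [|m IH] H; first exact: H.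
have H1 := IH (fun k km => H k (leqW km)).
by apply: mp (mp _ H1) (H m.+1 (leqnn _)); rewrite /=; ptaut HL.
Qed.

Lemma dl_iter i m a c : (forall j, j <= m -> L (Imp (DiaIter (i + j) a) c)) ->
  L (Imp (DiaIter i (DiaLe m a)) c).
Proof.
elim: m => [|m IH] H; first by have := H 0 (leqnn 0); rewrite addn0.
have H1 := IH (fun k km => H k (leqW km)).
have H2 := H m.+1 (leqnn _); rewrite -DI_add in H2.
apply: itrans (di_or i _ _) _.
by apply: mp (mp _ H1) H2; ptaut HL.
Qed.

Lemma subst_Imp (s : nat -> form n) a b : subst s (Imp a b) = Imp (subst s a) (subst s b).
Proof. by []. Qed.

Lemma subst_DA (s : nat -> form n) js a : subst s (DA js a) = DA js (subst s a).
Proof. by elim: js => //= j js ->. Qed.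

Lemma subst_DI (s : nat -> form n) k a : subst s (DiaIter k a) = DiaIter k (subst s a).
Proof. by elim: k a => //= k IH a; rewrite IH; congr DiaIter; apply: subst_DA. Qed.

Lemma subst_DL (s : nat -> form n) m a : subst s (DiaLe m a) = DiaLe m (subst s a).
Proof.
elim: m => [|m IH]; first exact: subst_DI.
rewrite (_ : DiaLe m.+1 a = Or (DiaLe m a) (DiaIter m.+1 a)) //.
rewrite (_ : DiaLe m.+1 (subst s a) = Or (DiaLe m (subst s a)) (DiaIter m.+1 (subst s a))) //.
by rewrite /Or /Neg !subst_Imp IH subst_DI.
Qed.

Lemma subst_BL (s : nat -> form n) m a : subst s (BoxLe m a) = BoxLe m (subst s a).
Proof. by rewrite /BoxLe /Neg subst_Imp subst_DL. Qed.

Variable m : nat.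
Hypothesis HP : pretrans_index L m.

Lemma pt a : L (Imp (DiaIter m.+1 a) (DiaLe m a)).
Proof.
have H := nl_Sub HL (fun _ => a) HP.
by rewrite subst_Imp subst_DI subst_DL in H.
Qed.

Lemma di_dl k a : L (Imp (DiaIter k a) (DiaLe m a)).
Proof.
elim/ltn_ind: k a => k IH a.
case: (leqP k m) => [km|mk]; first exact: dl_intro.
pose i := k - m.+1.
have Ek : k = i + m.+1 by rewrite subnK.
rewrite Ek -DI_add.
apply: itrans (di_mono i (pt a)) _.
apply: dl_iter => j jm; apply: IH.
by rewrite [X in _ < X]Ek ltn_add2l ltnS.
Qed.

Lemma dl_dl a : L (Imp (DiaLe m (DiaLe m a)) (DiaLe m a)).
Proof. apply: dl_elim => k _; apply: dl_iter => j _; exact: di_dl. Qed.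

Lemma dl_T a : L (Imp a (DiaLe m a)).
Proof. exact: (dl_intro a (leq0n m)). Qed.

Lemma dia_dl i a : L (Imp (Dia i a) (DiaLe m a)).
Proof.
apply: itrans (di_dl 1 a).
exact: (da_in a (mem_enum _ i)).
Qed.

Definition Bs (a : form n) := BoxLe m a.

Lemma bs_mono a b : L (Imp a b) -> L (Imp (Bs a) (Bs b)).
Proof.
move=> H; have H' : L (Imp (Neg b) (Neg a)) by apply: mp H; ptaut HL.
by apply: mp (dl_mono m H'); rewrite /Bs /BoxLe; ptaut HL.
Qed.

Lemma bs_and a b : L (Imp (Bs a) (Imp (Bs b) (Bs (And a b)))).
Proof.
have H1 : L (Imp (DiaLe m (Neg (And a b))) (DiaLe m (Or (Neg a) (Neg b)))).
  by apply: dl_mono; ptaut HL.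
have H2 := dl_or m (Neg a) (Neg b).
by apply: mp (mp _ H1) H2; rewrite /Bs /BoxLe; ptaut HL.
Qed.

Lemma bs_nec a : L a -> L (Bs a).
Proof.
move=> H; apply: dl_neg.
by apply: mp H; ptaut HL.
Qed.

Lemma bs_T a : L (Imp (Bs a) a).
Proof. by apply: mp (dl_T (Neg a)); rewrite /Bs /BoxLe; ptaut HL. Qed.

Lemma bs_4 a : L (Imp (Bs a) (Bs (Bs a))).
Proof.
have H : L (Imp (DiaLe m (Neg (Bs a))) (DiaLe m (DiaLe m (Neg a)))).
  by apply: dl_mono; rewrite /Bs /BoxLe; ptaut HL.
by apply: mp (mp _ H) (dl_dl (Neg a)); rewrite /Bs /BoxLe; ptaut HL.
Qed.

Lemma bs_box i a : L (Imp (Bs a) (Box i a)).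
Proof.
have H1 := dia_dl i (Neg a).
have H2 : L (Imp (Box i (Neg (Neg a))) (Box i a)) by apply: box_mono; ptaut HL.
by apply: mp (mp _ H1) H2; rewrite /Bs /BoxLe; ptaut HL.
Qed.

End Modal.

End PB.
Import PB.

Module PC.

Section Canon.
Variable n : nat.
Variable L : form n -> Prop.
Hypothesis HL : normal L.

Definition cons (A : form n -> Prop) :=
  ~ exists l, (forall x, inl x l -> A x) /\ der L l Bot.

Definition mcs (x : form n -> Prop) := cons x /\ forall a, x a \/ x (Neg a).

Lemma mcs_der x l a : mcs x -> (forall y, inl y l -> x y) -> der L l a -> x a.
Proof.
move=> [Hc Ht] Hl Hd; case: (Ht a) => // Hn; exfalso; apply: Hc.
exists (Neg a :: l); split; first by move=> y [<-|/Hl].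
exact: dmp (der_hyp0 _ _ _) (der_cons _ Hd).
Qed.

Lemma mcs_L x a : mcs x -> L a -> x a.
Proof. by move=> Hx Ha; apply: (mcs_der (l := nil)) => //; apply: dthm. Qed.

Lemma mcs_mp x a b : mcs x -> x (Imp a b) -> x a -> x b.
Proof.
move=> Hx H1 H2; apply: (mcs_der (l := [:: Imp a b; a])) => //.
  by move=> y [<-|[<-|[]]].
by apply: dmp (dhyp _ _) (dhyp _ _); [left|right;left].
Qed.

Lemma mcs_not x a : mcs x -> x a -> ~ x (Neg a).
Proof.
move=> [Hc _] H1 H2; apply: Hc; exists [:: Neg a; a]; split.
  by move=> y [<-|[<-|[]]].
by apply: dmp (dhyp _ _) (dhyp _ _); [left|right;left].
Qed.

Lemma mcs_neg x a : mcs x -> ~ x a -> x (Neg a).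
Proof. by move=> [_ Ht] Hn; case: (Ht a). Qed.

Lemma mcs_imp x a b : mcs x -> L (Imp a b) -> x a -> x b.
Proof. by move=> Hx H; apply: mcs_mp Hx (mcs_L Hx H). Qed.

Lemma split_list (P : form n -> Prop) a l :
  (forall y, inl y l -> P y \/ y = a) ->
  exists l', (forall y, inl y l' -> P y) /\ (forall y, inl y l -> inl y (a :: l')).
Proof.
elim: l => [|b l IH] H; first by exists nil.
have [l' [H1 H2]] := IH (fun y h => H y (or_intror h)).
case: (H b (or_introl erefl)) => [Pb|->].
- exists (b :: l'); split; first by move=> y [<-|/H1].
  move=> y [<-|/H2 [->|h]]; [by right;left|by left|by right;right].
- exists l'; split => // y [<-|/H2]; [by left|by []].
Qed.

Lemma lindenbaum (G : form n -> Prop) : cons G ->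
  exists x, mcs x /\ forall a, G a -> x a.
Proof.
move=> HG.
pose T := {A : form n -> Prop | (forall a, G a -> A a) /\ cons A}.
pose t0 : T := exist _ G (conj (fun a h => h) HG).
pose R := fun s t : T => `[< forall a, sval s a -> sval t a >].
have [|||t tmax] := @classical_sets.ZL_preorder T t0 R.
- by move=> t; apply/asboolP.
- by move=> r s t /asboolP H1 /asboolP H2; apply/asboolP => a /H1/H2.
- move=> A Atot.
  pose U a := G a \/ exists t, A t /\ sval t a.
  have cU : cons U.
    move=> [l [Hl Hd]].
    have : (forall y, inl y l -> G y) \/
           exists t, A t /\ forall y, inl y l -> sval t y.
      elim: l Hl {Hd} => [|b l IH] Hl; first by left.
      have := IH (fun y h => Hl y (or_intror h)).
      case: (Hl b (or_introl erefl)) => [Gb|[tb [Atb tbb]]] [IHl|[t [At Ht]]].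
      + by left => y [<-|/IHl].
      + by right; exists t; split => // y [<-|/Ht]; [apply: (proj1 (svalP t))|].
      + right; exists tb; split => // y [<-|/IHl] //.
        exact: (proj1 (svalP tb)).
      + case: (Atot _ _ At Atb) => /asboolP Hr.
        * by right; exists tb; split => // y [<-|/Ht/Hr].
        * by right; exists t; split => // y [<-|/Ht]; [apply: Hr|].
    case=> [HGl|[t [_ Ht]]].
    + by apply: (HG); exists l.
    + by apply: (proj2 (svalP t)); exists l.
  exists (exist _ U (conj (fun a h => or_introl h) cU)) => s As.
  by apply/asboolP => a sa; right; exists s.
- exists (sval t); split; last exact: (proj1 (svalP t)).
  split; first exact: (proj2 (svalP t)).
  move=> a.
  have ext : forall b, cons (fun c => sval t c \/ c = b) -> sval t b.
    move=> b Hc.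
    have Gs : forall c, G c -> sval t c \/ c = b.
      by move=> c /(proj1 (svalP t)); left.
    have /asboolP := tmax (exist _ _ (conj Gs Hc)) (asboolT (fun c h => or_introl h)).
    by apply; right.
  case: (pselect (sval t a)) => [|Hna]; first by left.
  case: (pselect (sval t (Neg a))) => [|Hnna]; first by right.
  exfalso.
  have [l1 [Hl1 Hd1]] : exists l, (forall y, inl y l -> sval t y \/ y = a) /\ der L l Bot.
    apply: NNPP => Hn; apply: Hna; apply: ext => [[l [H1 H2]]]; apply: Hn; by exists l.
  have [l2 [Hl2 Hd2]] : exists l, (forall y, inl y l -> sval t y \/ y = Neg a) /\ der L l Bot.
    apply: NNPP => Hn; apply: Hnna; apply: ext => [[l [H1 H2]]]; apply: Hn; by exists l.
  have [l1' [H1' H1'']] := split_list Hl1.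
  have [l2' [H2' H2'']] := split_list Hl2.
  apply: (proj2 (svalP t)); exists (l1' ++ l2'); split.
    by move=> y /inl_cat [/H1'|/H2'].
  have D1 : der L l1' (Neg a) by apply: deduction => //; apply: der_weak H1'' Hd1.
  have D2 : der L l2' (Neg (Neg a)) by apply: deduction => //; apply: der_weak H2'' Hd2.
  apply: dmp (der_weak _ D2) (der_weak _ D1) => y Hy; apply/inl_cat; tauto.
Qed.


Fixpoint imps (l : seq (form n)) (c : form n) : form n :=
  match l with nil => c | y :: l => imps l (Imp y c) end.

Lemma der_imps l c : der L l c -> L (imps l c).
Proof.
elim: l c => [|y l IH] c H /=; first exact: der_nil.
by apply: IH; apply: deduction.
Qed.

Section Exist.
Variable B : form n -> form n.
Hypothesis Bmono : forall a b, L (Imp a b) -> L (Imp (B a) (B b)).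
Hypothesis Band : forall a b, L (Imp (B a) (Imp (B b) (B (And a b)))).
Hypothesis Bnec : forall a, L a -> L (B a).

Lemma B_K a b : L (Imp (B (Imp a b)) (Imp (B a) (B b))).
Proof.
have H1 := Band (Imp a b) a.
have H2 : L (Imp (B (And (Imp a b) a)) (B b)) by apply: Bmono; ptaut HL.
by apply: (mp HL (mp HL _ H1) H2); ptaut HL.
Qed.

Lemma B_imps z l c : mcs z -> (forall y, inl y l -> z (B y)) -> L (imps l c) -> z (B c).
Proof.
move=> Hz; elim: l c => [|y l IH] c Hl H /=.
  exact: mcs_L Hz (Bnec H).
have H1 := IH (Imp y c) (fun x h => Hl x (or_intror h)) H.
have H2 := mcs_mp Hz (mcs_L Hz (B_K y c)) H1.
exact: mcs_mp Hz H2 (Hl y (or_introl erefl)).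
Qed.

Lemma exist_B z th : mcs z -> ~ z (B th) ->
  exists w, mcs w /\ (forall c, z (B c) -> w c) /\ ~ w th.
Proof.
move=> Hz Hn.
have cG : cons (fun a => z (B a) \/ a = Neg th).
  move=> [l [Hl Hd]].
  have [l' [H1 H2]] := split_list Hl.
  have D : der L l' (Neg (Neg th)) by apply: deduction => //; apply: der_weak H2 Hd.
  have D' : der L l' th := dmp (dthm _ (nl_ax3 HL th)) D.
  exact: Hn (B_imps Hz H1 (der_imps D')).
have [w [Hw Hsub]] := lindenbaum cG.
exists w; split => //; split; first by move=> c h; apply: Hsub; left.
by move=> Hth; apply: (mcs_not Hw Hth); apply: Hsub; right.
Qed.
End Exist.

Variable m : nat.
Hypothesis HP : pretrans_index L m.

Definition Rs (z w : form n -> Prop) := forall c, z (Bs m c) -> w c.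

Lemma Rs_refl z : mcs z -> Rs z z.
Proof. by move=> Hz c; apply: mcs_imp Hz (bs_T HL m c). Qed.

Lemma Rs_trans z w v : mcs z -> Rs z w -> Rs w v -> Rs z v.
Proof. by move=> Hz H1 H2 c /(mcs_imp Hz (bs_4 HL HP c)) /H1 /H2. Qed.

Lemma Rs_box z w : mcs z -> Rs z w -> forall c, z (Bs m c) -> w (Bs m c).
Proof. by move=> Hz H c /(mcs_imp Hz (bs_4 HL HP c)) /H. Qed.

Definition final z := forall w, mcs w -> Rs z w -> Rs w z.

Lemma final_succ z w : mcs z -> mcs w -> final z -> Rs z w -> final w.
Proof.
move=> Hz Hw Fz Hzw v Hv Hwv.
have Hzv := Rs_trans Hz Hzw Hwv.
exact: Rs_trans Hv (Fz v Hv Hzv) Hzw.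
Qed.

Lemma exist_Bs z th : mcs z -> ~ z (Bs m th) ->
  exists w, mcs w /\ Rs z w /\ ~ w th.
Proof.
apply: exist_B.
- by move=> a b; apply: bs_mono.
- exact: bs_and.
- exact: bs_nec.
Qed.

Lemma maximal x : mcs x -> exists y, mcs y /\ Rs x y /\ final y.
Proof.
move=> Hx.
pose T := {y : form n -> Prop | mcs y /\ Rs x y}.
pose t0 : T := exist _ x (conj Hx (Rs_refl Hx)).
pose R := fun s t : T => `[< Rs (sval s) (sval t) >].
have [|||t tmax] := @classical_sets.ZL_preorder T t0 R.
- by move=> t; apply/asboolP; apply: Rs_refl (proj1 (svalP t)).
- move=> r s t /asboolP H1 /asboolP H2; apply/asboolP.
  exact: Rs_trans (proj1 (svalP r)) H1 H2.
- move=> A Atot.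
  pose U a := x (Bs m a) \/ exists t, A t /\ sval t (Bs m a).
  have cU : cons U.
    move=> [l [Hl Hd]].
    have : (forall y, inl y l -> x (Bs m y)) \/
           exists t, A t /\ forall y, inl y l -> sval t (Bs m y).
      elim: l Hl {Hd} => [|b l IH] Hl; first by left.
      have := IH (fun y h => Hl y (or_intror h)).
      case: (Hl b (or_introl erefl)) => [Gb|[tb [Atb tbb]]] [IHl|[t [At Ht]]].
      + by left => y [<-|/IHl].
      + right; exists t; split => // y [<-|/Ht] //.
        exact: Rs_box Hx (proj2 (svalP t)) _ Gb.
      + right; exists tb; split => // y [<-|/IHl] //.
        exact: Rs_box Hx (proj2 (svalP tb)) _.
      + case: (Atot _ _ At Atb) => /asboolP Hr.
        * right; exists tb; split => // y [<-|/Ht] // h.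
          exact: Rs_box (proj1 (svalP t)) Hr _ h.
        * right; exists t; split => // y [<-|/Ht] //.
          exact: Rs_box (proj1 (svalP tb)) Hr _ tbb.
    case=> [HGl|[t [_ Ht]]].
    + apply: (proj1 Hx); exists l; split => // y /HGl.
      exact: mcs_imp Hx (bs_T HL m y).
    + apply: (proj1 (proj1 (svalP t))); exists l; split => // y /Ht.
      exact: mcs_imp (proj1 (svalP t)) (bs_T HL m y).
  have [y [Hy HUy]] := lindenbaum cU.
  have Hxy : Rs x y by move=> c h; apply: HUy; left.
  exists (exist _ y (conj Hy Hxy)) => s As.
  by apply/asboolP => c h; apply: HUy; right; exists s.
- exists (sval t); split; first exact: (proj1 (svalP t)).
  split; first exact: (proj2 (svalP t)).
  move=> w Hw Htw.
  have Hxw : Rs x w := Rs_trans Hx (proj2 (svalP t)) Htw.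
  have /asboolP := tmax (exist _ w (conj Hw Hxw)) (asboolT Htw).
  by [].
Qed.

End Canon.

End PC.
Import PC.

Module PD.

Lemma subst_id n (a : form n) : subst Var a = a.
Proof. by elim: a => //= [a -> b ->|i a ->]. Qed.

Lemma subst_comp n (s t : nat -> form n) a :
  subst s (subst t a) = subst (fun k => subst s (t k)) a.
Proof. by elim: a => //= [a -> b ->|i a ->]. Qed.

Section Main.
Variable n : nat.
Variable L : form n -> Prop.
Hypothesis HL : normal L.
Variable m : nat.
Hypothesis HP : pretrans_index L m.

Lemma negdl c : L (Imp (Neg (DiaLe m c)) (Bs m (Neg c))).
Proof.
have H : L (Imp (DiaLe m (Neg (Neg c))) (DiaLe m c)).
  by apply: (dl_mono HL); ptaut HL.
by apply: (mp HL _ H); rewrite /Bs /BoxLe; ptaut HL.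
Qed.

Lemma mcs_impI z a b : mcs L z -> (z a -> z b) -> z (Imp a b).
Proof.
move=> Hz H; case: (proj2 Hz a) => [/H Hb|Hna].
  by apply: mcs_imp Hz _ Hb; ptaut HL.
by apply: mcs_imp Hz _ Hna; ptaut HL.
Qed.

Definition Mset (a : form n) :=
  forall s z, mcs L z -> final L m z -> z (subst s a).

Lemma Mset_normal : normal Mset.
Proof.
split.
- by move=> a b s z Hz _; apply: mcs_L Hz (nl_ax1 HL _ _).
- by move=> a b c s z Hz _; apply: mcs_L Hz (nl_ax2 HL _ _ _).
- by move=> a s z Hz _; apply: mcs_L Hz (nl_ax3 HL _).
- by move=> i a b s z Hz _; apply: mcs_L Hz (nl_K HL _ _ _).
- by move=> a b H1 H2 s z Hz Fz; apply: mcs_mp Hz (H1 s z Hz Fz) (H2 s z Hz Fz).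
- move=> i a Ha s z Hz Fz /=.
  apply: NNPP => Hn.
  have Bmono : forall a b, L (Imp a b) -> L (Imp (Box i a) (Box i b)).
    by move=> ? ?; apply: box_mono.
  have [w [Hw [Hzw Hnw]]] := exist_B HL Bmono (box_and HL i) (fun a h => nl_Nec HL i h) Hz Hn.
  have Rzw : Rs m z w.
    by move=> c /(mcs_imp Hz (bs_box HL HP i c)) /Hzw.
  exact: Hnw (Ha s w Hw (final_succ HL HP Hz Hw Fz Rzw)).
- by move=> t a Ha s z Hz Fz; rewrite subst_comp; apply: Ha.
Qed.

Lemma Mset_L a : L a -> Mset a.
Proof. by move=> Ha s z Hz _; apply: mcs_L Hz (nl_Sub HL s Ha). Qed.

Lemma Mset_ax : Mset (Imp (Var 1) (BoxLe m (DiaLe m (Var 1)))).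
Proof.
move=> s z Hz Fz; rewrite subst_Imp subst_BL subst_DL /=; apply: (mcs_impI Hz) => Hc.
apply: NNPP => Hn.
have [w [Hw [Hzw Hnw]]] := exist_Bs HL Hz Hn.
have Hwz := Fz w Hw Hzw.
have H1 := mcs_neg Hw Hnw.
have H2 := mcs_imp Hw (negdl _) H1.
exact: mcs_not Hz Hc (Hwz _ H2).
Qed.

Lemma L1_to_L a : L1 L m a -> L (DiaLe m (BoxLe m a)).
Proof.
move=> H1.
have Ma : Mset a := H1 Mset Mset_normal Mset_L Mset_ax.
apply: NNPP => Hn.
have cG : cons L (fun b => b = Neg (DiaLe m (BoxLe m a))).
  move=> [l [Hl Hd]]; apply: Hn.
  have D : der L [:: Neg (DiaLe m (BoxLe m a))] Bot.
    by apply: der_weak Hd => y /Hl ->; left.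
  have H := der_nil HL (deduction HL D).
  exact: (mp HL (nl_ax3 HL _) H).
have [x [Hx Hxs]] := lindenbaum HL cG.
have [y [Hy [Hxy Fy]]] := maximal HL HP Hx.
have Hyb : y (BoxLe m a).
  apply: NNPP => Hnb.
  have [w [Hw [Hyw Hnw]]] := exist_Bs HL Hy Hnb.
  have Fw := final_succ HL HP Hy Hw Fy Hyw.
  by apply: Hnw; have := Ma Var w Hw Fw; rewrite subst_id.
have Hnx := Hxs _ erefl.
have H2 := mcs_imp Hx (negdl _) Hnx.
exact: mcs_not Hy Hyb (Hxy _ H2).
Qed.

End Main.

End PD.
Import PD.

Module PE.

Lemma L_to_L1 n (L : form n -> Prop) m a : normal L ->
  L (DiaLe m (BoxLe m a)) -> L1 L m a.
Proof.
move=> HL H L' HL' sub Hax.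
have H1 := nl_Sub HL' (fun _ => Neg a) Hax.
rewrite subst_Imp subst_BL subst_DL /= in H1.
have H2 := sub _ H.
by apply: (mp HL' (mp HL' _ H1) H2); rewrite /BoxLe; ptaut HL'.
Qed.

Section Sem.
Variable n : nat.
Variable W : Type.
Variable R : 'I_n -> W -> W -> Prop.

Lemma sat_ext V V' (w : W) a : (forall k x, V k x <-> V' k x) ->
  (sat R V w a <-> sat R V' w a).
Proof.
move=> H; elim: a w => [k||a IHa b IHb|i a IH] w /=.
- exact: H.
- by [].
- by rewrite IHa IHb.
- by split=> H1 v Hv; apply/IH; apply: H1.
Qed.

Lemma sat_subst V s (w : W) a :
  sat R V w (subst s a) <-> sat R (fun k x => sat R V x (s k)) w a.
Proof.
elim: a w => [k||a IHa b IHb|i a IH] w /=.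
- by [].
- by [].
- by rewrite IHa IHb.
- by split=> H1 v Hv; apply/IH; apply: H1.
Qed.

Lemma valid_normal : normal (frame_valid R).
Proof.
split.
- by move=> a b V w /=.
- by move=> a b c V w /=; tauto.
- by move=> a V w /=; move: (classic (sat R V w a)); tauto.
- by move=> i a b V w /= H1 H2 v Hv; apply: H1 Hv (H2 v Hv).
- by move=> a b H1 H2 V w; apply: (H1 V w (H2 V w)).
- by move=> i a H V w v _; apply: H.
- by move=> s a H V w; apply/sat_subst; apply: H.
Qed.

Fixpoint path (k : nat) (w v : W) : Prop :=
  match k with
  | 0 => w = v
  | k.+1 => exists u, path k w u /\ exists i, R i u v
  end.

Lemma sat_Or V (w : W) a b : sat R V w (Or a b) <-> sat R V w a \/ sat R V w b.
Proof. by rewrite /=; move: (classic (sat R V w a)); tauto. Qed.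

Lemma sat_Dia V (w : W) i a : sat R V w (Dia i a) <-> exists v, R i w v /\ sat R V v a.
Proof.
rewrite /=; split.
- by move=> H; apply: NNPP => Hn; apply: H => v Hv Hs; apply: Hn; exists v.
- by move=> [v [Hv Hs]] H; apply: H Hv Hs.
Qed.

Lemma sat_DA V (w : W) js a :
  sat R V w (DA js a) <-> exists i, i \in js /\ exists v, R i w v /\ sat R V v a.
Proof.
elim: js => [|j js IH]; first by split=> // [[i []]].
have -> : DA (j :: js) a = Or (Dia j a) (DA js a) by [].
rewrite sat_Or IH sat_Dia; split.
- case=> [[v Hv]|[i [Hi Hv]]].
    by exists j; split; [rewrite in_cons eqxx|exists v].
  by exists i; split => //; rewrite in_cons Hi orbT.
- move=> [i [Hi [v [Hv Hs]]]]; move: Hi; rewrite in_cons => /orP [/eqP Eij|Hi].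
    by subst i; left; exists v.
  by right; exists i; split => //; exists v.
Qed.

Lemma sat_DI V k (w : W) a :
  sat R V w (DiaIter k a) <-> exists v, path k w v /\ sat R V v a.
Proof.
elim: k w a => [|k IH] w a.
  by split; [move=> H; exists w|move=> [v [Hp H]]; rewrite /= Hp].
have -> : DiaIter k.+1 a = DiaIter k (DA (enum 'I_n) a) by [].
rewrite IH; split.
- move=> [u [Hu /sat_DA [i [_ [v [Hv Hs]]]]]].
  by exists v; split => //; exists u; split => //; exists i.
- move=> [v [[u [Hu [i Hi]]] Hs]]; exists u; split => //.
  by apply/sat_DA; exists i; split; [apply: mem_enum|exists v].
Qed.

Definition Rsm (m : nat) (w v : W) := exists k, k <= m /\ path k w v.

Lemma sat_DL V m (w : W) a :
  sat R V w (DiaLe m a) <-> exists v, Rsm m w v /\ sat R V v a.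
Proof.
elim: m w => [|m IH] w.
  rewrite /=; split=> [H|[v [[k [Hk Hp]] Hs]]]; first by exists w; split => //; exists 0.
  by move: Hk; rewrite leqn0 => /eqP Ek; subst k; rewrite Hp.
rewrite -/(Or (DiaLe m a) (DiaIter m.+1 a)) sat_Or IH sat_DI; split.
- case=> [[v [[k [Hk Hp]] Hs]]|[v [Hp Hs]]].
    by exists v; split => //; exists k; split => //; apply: leqW.
  by exists v; split => //; exists m.+1.
- move=> [v [[k [Hk Hp]] Hs]]; move: Hk; rewrite leq_eqVlt => /orP [/eqP Ek|Hk].
    by subst k; right; exists v.
  by left; exists v; split => //; exists k.
Qed.

Lemma sat_BL V m (w : W) a :
  sat R V w (BoxLe m a) <-> forall v, Rsm m w v -> sat R V v a.
Proof.
rewrite /BoxLe /Neg [sat _ _ _ (Imp _ _)]/= sat_DL; split.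
- move=> H v Hv; apply: NNPP => Hn; apply: H; exists v; split => //.
- by move=> H [v [Hv Hs]]; apply: Hs; apply: H.
Qed.

Lemma path_add a b (w v : W) : path (a + b) w v <-> exists u, path a w u /\ path b u v.
Proof.
elim: b v => [|b IH] v; rewrite ?addn0 ?addnS /=.
  by split; [move=> H; exists v|move=> [u [H Hu]]; rewrite -Hu].
split.
- move=> [u [/IH [x [H1 H2]] Hi]]; exists x; split => //; exists u; split => //.
- move=> [x [H1 [u [H2 Hi]]]]; exists u; split => //; apply/IH; exists x; tauto.
Qed.

Variable m : nat.
Hypothesis HP : frame_valid R (Imp (DiaIter m.+1 (Var 0)) (DiaLe m (Var 0))).

Lemma path_Rs k (w v : W) : path k w v -> Rsm m w v.
Proof.
elim/ltn_ind: k w v => k IH w v Hp.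
case: (leqP k m) => [km|mk]; first by exists k.
pose i := k - m.+1.
have Ek : k = m.+1 + i by rewrite addnC subnK.
rewrite Ek in Hp; move: Hp => /path_add [u [Hu Huv]].
have : Rsm m w u.
  have H0 := @HP (fun _ x => x = u) w.
  have H1 : sat R (fun _ x => x = u) w (DiaIter m.+1 (Var 0)).
    by apply: (proj2 (sat_DI _ _ _ _)); exists u.
  have H2 : sat R (fun _ x => x = u) w (DiaLe m (Var 0)) := H0 H1.
  move: H2; rewrite sat_DL; case=> [x [Hx Ex]].
  by rewrite /= in Ex; rewrite -Ex.
move=> [j [jm Hj]].
apply: (IH (j + i)); last by apply/path_add; exists u.
by rewrite Ek ltn_add2r ltnS.
Qed.

Lemma Rs_refl (w : W) : Rsm m w w.
Proof. by exists 0. Qed.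

Lemma Rs_trans (w u v : W) : Rsm m w u -> Rsm m u v -> Rsm m w v.
Proof.
move=> [j [_ Hj]] [k [_ Hk]]; apply: (@path_Rs (j + k)).
by apply/path_add; exists u.
Qed.

Lemma Rs_step (w u v : W) i : Rsm m w u -> R i u v -> Rsm m w v.
Proof.
move=> [j [_ Hj]] Hi; apply: (@path_Rs j.+1).
by exists u; split => //; exists i.
Qed.

End Sem.

End PE.
Import PE.

Module PF.

Section Fin.
Variable n : nat.
Variable m : nat.
Variable W : finType.
Variable R : 'I_n -> W -> W -> Prop.
Hypothesis HP : frame_valid R (Imp (DiaIter m.+1 (Var 0)) (DiaLe m (Var 0))).

Definition cone (y : W) := [set z | `[< Rsm R m y z >]].

Lemma final_exists (w : W) :
  exists y, Rsm R m w y /\ forall z, Rsm R m y z -> Rsm R m z y.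
Proof.
suff H : forall N y, #|cone y| <= N ->
    exists y', Rsm R m y y' /\ forall z, Rsm R m y' z -> Rsm R m z y'.
  exact: (H _ w (leqnn _)).
elim=> [|N IH] y Hc.
  have : 0 < #|cone y|.
    by apply/card_gt0P; exists y; rewrite inE; apply/asboolP; apply: Rs_refl.
  by rewrite leqn0 in Hc; rewrite (eqP Hc).
case: (pselect (forall z, Rsm R m y z -> Rsm R m z y)) => [Fy|NFy].
  by exists y; split => //; apply: Rs_refl.
have [z [Hyz Hzy]] : exists z, Rsm R m y z /\ ~ Rsm R m z y.
  apply: NNPP => Hn; apply: NFy => z Hyz; apply: NNPP => Hzy; apply: Hn.
  by exists z.
have Hp : cone z \proper cone y.
  apply/properP; split.
    apply/subsetP => x; rewrite !inE => /asboolP Hx; apply/asboolP.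
    exact: (Rs_trans HP Hyz Hx).
  exists y; rewrite !inE; first by apply/asboolP; apply: Rs_refl.
  by apply/negP => /asboolP.
have Hz : #|cone z| <= N.
  by rewrite -ltnS; apply: leq_trans (proper_card Hp) Hc.
have [y' [Hzy' Fy']] := IH z Hz.
by exists y'; split => //; apply: (Rs_trans HP Hyz Hzy').
Qed.

Variable y : W.
Definition Wc : finType := {z : W | `[< Rsm R m y z >]}.
Definition Rc (i : 'I_n) (c d : Wc) := R i (val c) (val d).

Lemma transfer V0 (c : Wc) b :
  sat Rc (fun k d => V0 k (val d)) c b <-> sat R V0 (val c) b.
Proof.
elim: b c => [k||a IHa b IHb|i a IH] c /=.
- by [].
- by [].
- by rewrite IHa IHb.
- split=> H.
  + move=> v Hv.
    have Hyv : `[< Rsm R m y v >].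
      apply/asboolP; apply: (Rs_step HP (asboolW (valP c)) Hv).
    exact: (proj1 (IH (exist _ v Hyv))) (H (exist _ v Hyv) Hv).
  + by move=> d Hd; apply/IH; apply: H.
Qed.

Lemma transfer_valid b : (forall V0 (c : Wc), sat R V0 (val c) b) -> frame_valid Rc b.
Proof.
move=> Hb Vc c.
pose V0 k x := exists d : Wc, val d = x /\ Vc k d.
have E : forall k d, Vc k d <-> V0 k (val d).
  move=> k d; split; first by move=> h; exists d.
  by move=> [d' [/val_inj -> h]].
apply/(sat_ext _ _ _ E)/transfer; exact: Hb.
Qed.

End Fin.

Lemma fmp_L1 n (L : form n -> Prop) m : normal L -> pretrans_index L m ->
  fmp L -> fmp (L1 L m).
Proof.
move=> HL HPm [C HC].
pose ax := Imp (Var 1) (BoxLe m (DiaLe m (Var 1))) : form n.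
exists (fun (W : finType) R => (forall a, L a -> frame_valid R a) /\ frame_valid R ax).
move=> a; split.
- move=> Ha W R [HLW HaxW].
  exact: Ha (frame_valid R) (valid_normal R) HLW HaxW.
- move=> Ha; apply: L_to_L1 => //.
  apply/HC => W R HCR V w.
  have HLR : forall b, L b -> frame_valid R b by move=> b /HC; apply.
  have HPR := HLR _ HPm.
  have [y [Hwy Fy]] := final_exists HPR w.
  apply/sat_DL; exists y; split => //.
  apply/sat_BL => z Hyz.
  have Hz : `[< Rsm R m y z >] by apply/asboolP.
  pose c : Wc m R y := exist _ z Hz.
  apply: (proj1 (transfer HPR V c a)).
  apply: Ha; split.
  + by move=> b /HLR Hb; apply: (transfer_valid HPR) => V0 d; exact: (Hb V0 (val d)).
  + apply: (transfer_valid HPR) => V0 d Hd.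
    apply/sat_BL => u Hdu; apply/sat_DL; exists (val d); split => //.
    have Hyd : Rsm R m y (val d) := asboolW (valP d).
    have Hyu := Rs_trans HPR Hyd Hdu.
    exact: (Rs_trans HPR (Fy _ Hyu) Hyd).
Qed.

End PF.
Import PF.

Theorem theorem3p7 (n : nat) (L : form n -> Prop) (m : nat) :
  normal L -> pretransitive L -> least_pretrans_index L m ->
  (* (1) *)
  (forall a : form n, L1 L m a <-> L (DiaLe m (BoxLe m a))) /\
  (* (2) decidability transfers: any decision procedure for L yields one for
     L[1], obtained by precomposition with the syntactic map a |-> <>* []* a *)
  (forall dec : form n -> bool, decides L dec ->
     decides (L1 L m) (fun a => dec (DiaLe m (BoxLe m a)))) /\
  (* (3) *)
  (fmp L -> fmp (L1 L m)).
Proof.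
move=> HL _ [HPm _].
have P1 : forall a : form n, L1 L m a <-> L (DiaLe m (BoxLe m a)).
  by move=> a; split; [apply: L1_to_L|apply: L_to_L1].
split => //; split.
- by move=> dec Hdec a; rewrite P1; apply: Hdec.
- exact: fmp_L1.
Qed.
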